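(* Let $f$ be a Boolean function, let $a$ be a truth assignment to a superset of $var(f)$, let $x\in var(f)$, and let $\ell\in\{x,\overline{x}\}$ be the literal on $x$ satisfied by $a$. Then $$\textit{SR}(f,a)=\{t\wedge\ell\mid t\in\textit{SR}(f|\ell,a),\ t\not\models f|\overline{\ell}\}\ \cup\ \textit{SR}(f|\overline{x}\wedge f|x,\,a).$$
   Context: A term is a conjunction of literals; $t$ is an implicant of $f$ if $t\models f$, and a prime implicant if no term obtained from $t$ by deleting one literal is an implicant of $f$. $var(f)$ is the set of variables of $f$. For a literal $\ell$ on $x$, $f|\ell$ is the Boolean function over $var(f)\setminus\{x\}$ obtained by fixing $x$ so that $\ell$ is true. For a Boolean function $f$ and an assignment $a$ to a superset of $var(f)$, $\textit{SR}(f,a)$ denotes the set of prime implicants of $f$ that are satisfied by $a$ (the sufficient reasons for $a$ given $f$ when $a$ satisfies $f$). *)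

(* Defs.v *)
From mathcomp Require Import all_boot.
Set Implicit Arguments. Unset Strict Implicit. Unset Printing Implicit Defensive.

Section BoolFun.
Variable V : finType.

Definition assignment := {ffun V -> bool}.
Definition bfun := assignment -> bool.

(* f depends only on the variables in X (X plays the role of var(f)). *)
Definition depends_only (f : bfun) (X : {set V}) : Prop :=
  forall s s' : assignment, (forall v, v \in X -> s v = s' v) -> f s = f s'.

(* literal (v, b): v if b = true, negation of v if b = false *)
Definition lit := (V * bool)%type.
Definition neg_lit (l : lit) : lit := (l.1, ~~ l.2).
(* a term is a conjunction of literals, represented by its set of literals *)
Definition term := {set lit}.

Definition sat_lit (s : assignment) (l : lit) : bool := s l.1 == l.2.
Definition sat_term (s : assignment) (t : term) : bool :=
  [forall l in t, sat_lit s l].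

Definition implicant (t : term) (f : bfun) : bool :=
  [forall s : assignment, sat_term s t ==> f s].

Definition prime_implicant (t : term) (f : bfun) : bool :=
  implicant t f && [forall l in t, ~~ implicant (t :\ l) f].

Definition SR (f : bfun) (a : assignment) : {set term} :=
  [set t : term | prime_implicant t f && sat_term a t].

Definition restrict (f : bfun) (l : lit) : bfun :=
  fun s => f [ffun v => if v == l.1 then l.2 else s v].

Definition bconj (f g : bfun) : bfun := fun s => f s && g s.
End BoolFun.

(* Main.v *)
Require Import Defs.
From mathcomp Require Import all_boot.
Set Implicit Arguments. Unset Strict Implicit. Unset Printing Implicit Defensive.

Section Proof15.
Variables (V : finType) (f : bfun V) (x : V).

Definition upd (s : assignment V) (b : bool) : assignment V :=
  [ffun v => if v == x then b else s v].
Definition nox (t : term V) := forall m, m \in t -> m.1 != x.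
Let G := bconj (restrict f (x, false)) (restrict f (x, true)).

Lemma restrictE b s : restrict f (x, b) s = f (upd s b).
Proof. by []. Qed.

Lemma updK s : upd s (s x) = s.
Proof. by apply/ffunP => v; rewrite ffunE; case: eqP => // ->. Qed.

Lemma updupd s b c : upd (upd s b) c = upd s c.
Proof. by apply/ffunP => v; rewrite !ffunE; case: eqP. Qed.

Lemma sat_upd t s b : nox t -> sat_term (upd s b) t = sat_term s t.
Proof.
move=> H; apply: eq_forallb => m; case mt: (m \in t) => //=.
by rewrite /(@sat_lit V) ffunE (negbTE (H m mt)).
Qed.

Lemma sat_U1 (s : assignment V) (t : term V) (m : lit V) : sat_term s (t :|: [set m]) = sat_term s t && sat_lit s m.
Proof.
apply/forallP/andP => [I|[/forallP I h] m'].
  split; last by apply: (implyP (I m)); rewrite !inE eqxx orbT.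
  apply/forallP => m'; apply/implyP => mt; apply: (implyP (I m')).
  by rewrite !inE mt.
apply/implyP; rewrite !inE => /orP[mt|/eqP->] //; exact: (implyP (I m')).
Qed.

Lemma sat_sub (s : assignment V) (A B : term V) : A \subset B -> sat_term s B -> sat_term s A.
Proof.
move=> /subsetP sub /forallP I; apply/forallP => m; apply/implyP => mA.
exact: (implyP (I m)) (sub _ mA).
Qed.

Lemma nox_D1 (t : term V) (m : lit V) : nox t -> nox (t :\ m).
Proof. by move=> H m'; rewrite inE => /andP[_ /H]. Qed.

Lemma imp_nox t : nox t -> implicant t f = implicant t G.
Proof.
move=> H; apply/forallP/forallP => I s; apply/implyP => st.
  rewrite /G /bconj !restrictE; apply/andP; split;
    [move: (I (upd s false))|move: (I (upd s true))];
    by rewrite sat_upd // st.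
move: (I s); rewrite st /G /bconj !restrictE /= => /andP[h0 h1].
rewrite -[s in f s]updK; by case: (s x).
Qed.

Lemma imp_add t b : nox t ->
  implicant (t :|: [set (x, b)]) f = implicant t (restrict f (x, b)).
Proof.
move=> H; apply/forallP/forallP => I s; apply/implyP => st.
  rewrite restrictE; move: (I (upd s b)).
  by rewrite sat_U1 sat_upd // st /(@sat_lit V) /= ffunE !eqxx.
move: st; rewrite sat_U1 /(@sat_lit V) /= => /andP[st /eqP sb].
by move: (I s); rewrite st restrictE /= -sb updK.
Qed.

Lemma indep (g : bfun V) a t : (forall s c, g (upd s c) = g s) ->
  sat_term a t -> prime_implicant t g -> nox t.
Proof.
move=> Hg sa /andP[imp /forallP pr] m mt; apply/negP => /eqP mx.
move: (implyP (pr m) mt) => /negP; apply.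
apply/forallP => s; apply/implyP => st.
rewrite -(Hg s m.2); apply: (implyP (forallP imp _)).
apply/forallP => m'; apply/implyP => m't.
rewrite /(@sat_lit V) ffunE; case: (m'.1 =P x) => [e|ne].
  have h1 := implyP (forallP sa m') m't; have h2 := implyP (forallP sa m) mt.
  rewrite /(@sat_lit V) e in h1; rewrite /(@sat_lit V) mx in h2.
  by rewrite -(eqP h1) -(eqP h2).
case: (eqVneq m' m) => [e'|ne']; first by rewrite e' mx in ne.
by move: (implyP (forallP st m')); rewrite !inE ne' m't; apply.
Qed.

Lemma sat_lx (a : assignment V) (t : term V) (m : lit V) : sat_term a t -> m \in t -> m.1 = x -> m = (x, a x).
Proof.
move=> sa mt; have := implyP (forallP sa m) mt.
by case: m {mt} => m1 m2; rewrite /(@sat_lit V) /= => /eqP <- ->.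
Qed.

Lemma imp_bconj t (g h : bfun V) :
  implicant t (bconj g h) = implicant t g && implicant t h.
Proof.
apply/forallP/andP => [I|[/forallP I /forallP J] s].
  split; apply/forallP => s; apply/implyP => st; move: (implyP (I s) st);
  by rewrite /bconj => /andP[].
apply/implyP => st; rewrite /bconj (implyP (I s) st); exact: (implyP (J s) st).
Qed.

Lemma pi_nox t : nox t -> prime_implicant t f = prime_implicant t G.
Proof.
move=> H; rewrite /prime_implicant imp_nox //; congr andb.
apply: eq_forallb => m; congr (_ ==> ~~ _); apply: imp_nox; exact: nox_D1.
Qed.

Lemma pi_add t b : nox t ->
  prime_implicant (t :|: [set (x, b)]) f =
  prime_implicant t (restrict f (x, b)) && ~~ implicant t (restrict f (x, ~~ b)).
Proof.
move=> H.
have Lt : (x, b) \notin t by apply/negP => /H /=; rewrite eqxx.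
have eqA : forall m, m \in t -> (t :|: [set (x, b)]) :\ m = (t :\ m) :|: [set (x, b)].
  move=> m mt; have mL : m != (x, b) by apply/negP => /eqP e; rewrite -e mt in Lt.
  apply/setP => y; rewrite !inE; case: (y =P (x, b)) => [->|_].
    by rewrite eq_sym mL orbT.
  by rewrite !orbF.
have eqB : (t :|: [set (x, b)]) :\ (x, b) = t.
  apply/setP => y; rewrite !inE; case: (y =P (x, b)) => [->|_] /=.
    by rewrite (negbTE Lt).
  by rewrite orbF.
rewrite /prime_implicant imp_add //.
apply/andP/andP => [[i /forallP P]|[/andP[i /forallP P] ni]]; split.
- apply/andP; split => //; apply/forallP => m; apply/implyP => mt.
  have := implyP (P m); rewrite inE mt /= => /(_ isT).
  by rewrite eqA // imp_add //; apply: nox_D1.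
- have := implyP (P (x, b)); rewrite !inE eqxx orbT => /(_ isT).
  rewrite eqB imp_nox // /G imp_bconj.
  by case: b {eqA eqB P Lt} i => i; rewrite i ?andbT.
- done.
- apply/forallP => m; apply/implyP; rewrite !inE => /orP[mt|/eqP ->].
    rewrite eqA // imp_add; [exact: (implyP (P m) mt)|exact: nox_D1].
  rewrite eqB imp_nox // /G imp_bconj.
  by case: b {eqA eqB P Lt} i ni => i ni; rewrite (negbTE ni) ?andbF.
Qed.

End Proof15.

Theorem proposition15 (V : finType) (X : {set V}) (f : bfun V)
    (Hf : depends_only f X) (a : assignment V) (x : V) (hx : x \in X) :
  let l : lit V := (x, a x) in
  SR f a =
    [set t :|: [set l] | t in SR (restrict f l) a
                       & ~~ implicant t (restrict f (neg_lit l))]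
    :|: SR (bconj (restrict f (x, false)) (restrict f (x, true))) a.
Proof.
move=> l; rewrite /l /neg_lit /=.
apply/setP => t; rewrite in_setU /SR !in_set.
apply/idP/idP.
- move=> /andP[pt sa]; case lt: ((x, a x) \in t).
  + apply/orP; left; apply/imsetP; exists (t :\ (x, a x)).
      have nt : nox x (t :\ (x, a x)).
        move=> m; rewrite inE => /andP[ne mt]; apply/negP => /eqP mx.
        by move: ne; rewrite (sat_lx sa mt mx) set11.
      have et : t = (t :\ (x, a x)) :|: [set (x, a x)] by rewrite setUC setD1K.
      rewrite et pi_add // in pt; case/andP: pt => p1 p2.
      rewrite !inE p1 p2 andbT /=; apply: sat_sub sa; exact: subsetDl.
    by rewrite setUC setD1K.
  + apply/orP; right; rewrite -pi_nox ?pt ?sa //.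
    move=> m mt; apply/negP => /eqP mx.
    by rewrite -(sat_lx sa mt mx) mt in lt.
- case/orP => [/imsetP[t' ht' ->]| /andP[pt sa]].
  + move: ht'; rewrite !inE => /andP[/andP[p1 s1] n1].
    have nt : nox x t'.
      apply: (indep (g := restrict f (x, a x))) s1 p1 => s c.
      by rewrite !restrictE updupd.
    by rewrite pi_add // p1 n1 sat_U1 s1 /(@sat_lit V) /= eqxx.
  + have nt : nox x t.
      apply: (indep (g := bconj (restrict f (x, false)) (restrict f (x, true)))) sa pt => s c.
      by rewrite /bconj !restrictE !updupd.
    by rewrite (@pi_nox V f x t nt) pt sa.
Qed.
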